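(* Let $f$ be a real function on $\mathbb{T}^\kappa$ and $g$ a real function on $\mathbb{T}$. Fix $0<\alpha\le1$ and put $\gamma=1-\alpha$. Then $$\int_a^b f(t)\,({}_a\Delta_h^{\alpha}g)(t)\,\Delta t=h^\gamma f(\rho(b))g(b)-h^\gamma f(a)g(a)+\int_a^{\rho(b)}({}_h\Delta_{\rho(b)}^{\alpha}f)(t)\,g(\sigma(t))\,\Delta t$$ $$\quad+\frac{\gamma}{\Gamma(\gamma+1)}g(a)\Bigl(\int_a^b(t+\gamma h-a)_h^{(\gamma-1)}f(t)\Delta t-\int_{\sigma(a)}^{b}(t+\gamma h-\sigma(a))_h^{(\gamma-1)}f(t)\Delta t\Bigr).$$
   Context: Let $a\in\mathbb{R}$, $h>0$, $b=a+kh$ with $k\in\mathbb{N}$, $k\ge2$, $\mathbb{T}=\{a,a+h,\dots,b\}$, $\mathbb{T}^\kappa=\mathbb{T}\setminus\{b\}$, $\sigma(t)=t+h$, $\rho(t)=t-h$, $G^\Delta(t)=(G(t+h)-G(t))/h$. For $c\le d$, $\int_c^dG(s)\Delta s:=h\sum_{j=0}^{(d-c)/h-1}G(c+jh)$. $h$-factorial: $x_h^{(y)}:=h^y\Gamma(\frac{x}{h}+1)/\Gamma(\frac{x}{h}+1-y)$ (division at a pole yields zero). For $\nu\ge0$, $c\in\mathbb{T}$, $G$ defined on $\{s\in\mathbb{T}:s\le c\}$ and $t\in\mathbb{T}$, $t\le c$: $({}_a\Delta_h^{-\nu}G)(t+\nu h):=h^\nu G(t)+\frac{\nu}{\Gamma(\nu+1)}\int_a^t(t+\nu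 h-\sigma(s))_h^{(\nu-1)}G(s)\Delta s$, $({}_h\Delta_c^{-\nu}G)(t-\nu h):=h^\nu G(t)+\frac{\nu}{\Gamma(\nu+1)}\int_{\sigma(t)}^{\sigma(c)}(s+\nu h-\sigma(t))_h^{(\nu-1)}G(s)\Delta s$. For $0<\alpha\le1$, $\gamma=1-\alpha$, $t\in\mathbb{T}$, $t<c$: left fractional difference $({}_a\Delta_h^{\alpha}G)(t):=[\tau\mapsto({}_a\Delta_h^{-\gamma}G)(\tau+\gamma h)]^\Delta(t)$; right fractional difference with endpoint $c$: $({}_h\Delta_c^{\alpha}G)(t):=-[\tau\mapsto({}_h\Delta_c^{-\gamma}G)(\tau-\gamma h)]^\Delta(t)$. *)

(* Defs.v *)
From Stdlib Require Import Reals Lra Lia ClassicalEpsilon.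
Open Scope R_scope.

Fixpoint rsum (n : nat) (F : nat -> R) : R :=
  match n with O => 0 | S m => rsum m F + F m end.

(* Euler Gamma function via Gauss' limit formula
   Gamma z = lim n! n^z / (z (z+1) ... (z+n)), valid for z not in {0,-1,-2,...}. *)
Fixpoint rprod (n : nat) (F : nat -> R) : R :=
  match n with O => 1 | S m => rprod m F * F m end.

Definition gauss_seq (z : R) (n : nat) : R :=
  INR (Factorial.fact n) * Rpower (INR n) z / rprod (S n) (fun i => z + INR i).

Definition Gamma (z : R) : R :=
  epsilon (inhabits 0) (fun l => Un_cv (gauss_seq z) l).

Definition is_pole (z : R) : Prop := exists n : nat, z = - INR n.

(* h-factorial x_h^(y) = h^y Gamma(x/h+1) / Gamma(x/h+1-y); zero when the
   denominator argument is a pole of Gamma. *)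
Definition hfact (h x y : R) : R :=
  if excluded_middle_informative (is_pole (x / h + 1 - y)) then 0
  else Rpower h y * Gamma (x / h + 1) / Gamma (x / h + 1 - y).

Definition tsigma (h t : R) : R := t + h.
Definition trho (h t : R) : R := t - h.

(* number of steps (d-c)/h, for c <= d in the time scale *)
Definition nsteps (h c d : R) : nat := Z.to_nat (up ((d - c) / h) - 1).

(* delta integral: int_c^d G(s) Δs = h * sum_{j=0}^{(d-c)/h - 1} G(c + j h) *)
Definition dint (h c d : R) (G : R -> R) : R :=
  h * rsum (nsteps h c d) (fun j => G (c + INR j * h)).

Definition ddelta (h : R) (G : R -> R) (t : R) : R := (G (t + h) - G t) / h.

(* (a Δ_h^{-nu} G)(t + nu h), as a function of t *)
Definition left_fsum (h a nu : R) (G : R -> R) (t : R) : R :=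
  Rpower h nu * G t
  + nu / Gamma (nu + 1) *
    dint h a t (fun s => hfact h (t + nu * h - tsigma h s) (nu - 1) * G s).

(* (h Δ_c^{-nu} G)(t - nu h), as a function of t *)
Definition right_fsum (h c nu : R) (G : R -> R) (t : R) : R :=
  Rpower h nu * G t
  + nu / Gamma (nu + 1) *
    dint h (tsigma h t) (tsigma h c)
      (fun s => hfact h (s + nu * h - tsigma h t) (nu - 1) * G s).

Definition left_fdiff (h a alpha : R) (G : R -> R) (t : R) : R :=
  ddelta h (left_fsum h a (1 - alpha) G) t.

Definition right_fdiff (h c alpha : R) (G : R -> R) (t : R) : R :=
  - ddelta h (right_fsum h c (1 - alpha) G) t.

(* Main.v *)
Require Import Defs.
From Stdlib Require Import Reals Lra Lia ZArith.
Open Scope R_scope.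

Lemma rsum_ext n F G : (forall j, (j < n)%nat -> F j = G j) -> rsum n F = rsum n G.
Proof. induction n; intros H; simpl; [reflexivity|]. rewrite IHn by (intros; apply H; lia). rewrite H by lia. reflexivity. Qed.

Lemma rsum_lin n c1 c2 X Y : rsum n (fun i => c1 * X i + c2 * Y i) = c1 * rsum n X + c2 * rsum n Y.
Proof. induction n; simpl; [ring|]. rewrite IHn. ring. Qed.

Lemma rsum_scal n c X : rsum n (fun i => c * X i) = c * rsum n X.
Proof. induction n; simpl; [ring|]. rewrite IHn. ring. Qed.

Lemma rsum_minus n X Y : rsum n (fun i => X i - Y i) = rsum n X - rsum n Y.
Proof. induction n; simpl; [ring|]. rewrite IHn. ring. Qed.

Lemma rsum_shift n F : rsum (S n) F = F O + rsum n (fun i => F (S i)).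
Proof. induction n; simpl in *; [ring|]. rewrite IHn. ring. Qed.

Lemma rsum_S n F : rsum (S n) F = rsum n F + F n.
Proof. reflexivity. Qed.

Lemma rsum_swap N (F : nat -> nat -> R) :
  rsum N (fun i => rsum (N - i) (F i)) = rsum N (fun l => rsum (S l) (fun i => F i (l - i)%nat)).
Proof.
  induction N; [reflexivity|].
  rewrite rsum_S.
  rewrite (rsum_ext N (fun i => rsum (S N - i) (F i)) (fun i => 1 * rsum (N - i) (F i) + 1 * F i (N - i)%nat)).
  2:{ intros j Hj. replace (S N - j)%nat with (S (N - j)) by lia. simpl. ring. }
  rewrite rsum_lin, IHN. replace (S N - N)%nat with 1%nat by lia.
  simpl. rewrite Nat.sub_diag. ring.
Qed.

Lemma nsteps_eq h c d n : 0 < h -> d - c = INR n * h -> nsteps h c d = n.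
Proof.
  intros Hh E. unfold nsteps.
  replace ((d - c) / h) with (IZR (Z.of_nat n)) by (rewrite <- INR_IZR_INZ, E; field; lra).
  rewrite <- (up_tech (IZR (Z.of_nat n)) (Z.of_nat n)).
  - rewrite Z.add_simpl_r. apply Nat2Z.id.
  - lra.
  - rewrite plus_IZR. simpl. lra.
Qed.

Lemma INR_sub1 i j : (j < i)%nat -> INR (i - 1 - j) = INR i - 1 - INR j.
Proof.
  intros H. set (m := (i - 1 - j)%nat).
  assert (E : INR i = INR (m + 1 + j)) by (f_equal; unfold m; lia).
  rewrite E, !plus_INR. simpl. ring.
Qed.
Definition phi h nu (m : nat) := hfact h ((INR m + nu) * h) (nu - 1).
Definition Sg (ph G : nat -> R) (i : nat) := rsum i (fun j => ph (i - 1 - j)%nat * G j).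
Definition Tf (ph F : nat -> R) (n i : nat) := rsum (n - i) (fun m => ph m * F (i + 1 + m)%nat).
Definition Aseq h a nu (g : R -> R) i :=
  Rpower h nu * g (a + INR i * h) + nu / Gamma (nu + 1) * (h * Sg (phi h nu) (fun j => g (a + INR j * h)) i).
Definition Bseq h a nu (f : R -> R) n i :=
  Rpower h nu * f (a + INR i * h) + nu / Gamma (nu + 1) * (h * Tf (phi h nu) (fun j => f (a + INR j * h)) n i).

Lemma left_fsum_idx h a nu g i : 0 < h -> left_fsum h a nu g (a + INR i * h) = Aseq h a nu g i.
Proof.
  intros Hh. unfold left_fsum, Aseq, Sg, dint.
  rewrite (nsteps_eq h a (a + INR i * h) i Hh) by ring.
  apply Rplus_eq_compat_l, Rmult_eq_compat_l, Rmult_eq_compat_l, rsum_ext; intros j Hj.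
  unfold phi, tsigma. apply Rmult_eq_compat_r. f_equal. rewrite INR_sub1 by lia. ring.
Qed.

Lemma right_fsum_idx h a nu f n i : 0 < h -> (i <= n)%nat ->
  right_fsum h (a + INR n * h) nu f (a + INR i * h) = Bseq h a nu f n i.
Proof.
  intros Hh Hi. unfold right_fsum, Bseq, Tf, dint, tsigma.
  rewrite (nsteps_eq h _ _ (n - i) Hh) by (rewrite minus_INR by lia; ring).
  apply Rplus_eq_compat_l, Rmult_eq_compat_l, Rmult_eq_compat_l, rsum_ext; intros m Hm.
  unfold phi. f_equal; f_equal; [ring|]. rewrite !plus_INR. simpl. ring.
Qed.

Lemma LHS_idx h a alpha f g k : 0 < h ->
  dint h a (a + INR k * h) (fun t => f t * left_fdiff h a alpha g t)
  = h * rsum k (fun i => f (a + INR i * h) * ((Aseq h a (1 - alpha) g (S i) - Aseq h a (1 - alpha) g i) / h)).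
Proof.
  intros Hh. unfold dint. rewrite (nsteps_eq h a (a + INR k * h) k Hh) by ring.
  apply Rmult_eq_compat_l, rsum_ext; intros i Hi. apply Rmult_eq_compat_l.
  unfold left_fdiff, ddelta. replace (a + INR i * h + h) with (a + INR (S i) * h) by (rewrite S_INR; ring).
  rewrite !left_fsum_idx by exact Hh. reflexivity.
Qed.

Lemma R1_idx h a alpha f g n : 0 < h ->
  dint h a (a + INR n * h) (fun t => right_fdiff h (a + INR n * h) alpha f t * g (tsigma h t))
  = h * rsum n (fun i => - ((Bseq h a (1 - alpha) f n (S i) - Bseq h a (1 - alpha) f n i) / h) * g (a + INR (S i) * h)).
Proof.
  intros Hh. unfold dint. rewrite (nsteps_eq h a (a + INR n * h) n Hh) by ring.
  apply Rmult_eq_compat_l, rsum_ext; intros i Hi.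
  unfold right_fdiff, ddelta, tsigma. replace (a + INR i * h + h) with (a + INR (S i) * h) by (rewrite S_INR; ring).
  rewrite !right_fsum_idx by (try exact Hh; lia). reflexivity.
Qed.

Lemma R2_idx h a nu f k : 0 < h ->
  dint h a (a + INR k * h) (fun t => hfact h (t + nu * h - a) (nu - 1) * f t)
  = h * rsum k (fun i => phi h nu i * f (a + INR i * h)).
Proof.
  intros Hh. unfold dint. rewrite (nsteps_eq h a (a + INR k * h) k Hh) by ring.
  apply Rmult_eq_compat_l, rsum_ext; intros i Hi. unfold phi. f_equal. f_equal. ring.
Qed.

Lemma R3_idx h a nu f n : 0 < h ->
  dint h (tsigma h a) (a + INR (S n) * h) (fun t => hfact h (t + nu * h - tsigma h a) (nu - 1) * f t)
  = h * rsum n (fun i => phi h nu i * f (a + INR (S i) * h)).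
Proof.
  intros Hh. unfold dint, tsigma. rewrite (nsteps_eq h _ _ n Hh) by (rewrite S_INR; ring).
  apply Rmult_eq_compat_l, rsum_ext; intros i Hi. unfold phi. rewrite S_INR. f_equal; f_equal; ring.
Qed.
Lemma P1 n (F G : nat -> R) :
  rsum (S n) (fun i => F i * (G (S i) - G i)) + rsum n (fun i => (F (S i) - F i) * G (S i))
  = F n * G (S n) - F O * G O.
Proof. induction n; simpl in *; [ring|]. lra. Qed.

Lemma algebra (h p q : R) (ph F G : nat -> R) n : h <> 0 ->
  h * rsum (S n) (fun i => F i * (((p * G (S i) + q * (h * Sg ph G (S i))) - (p * G i + q * (h * Sg ph G i))) / h))
  = p * F n * G (S n) - p * F O * G O
    + h * rsum n (fun i => - (((p * F (S i) + q * (h * Tf ph F n (S i))) - (p * F i + q * (h * Tf ph F n i))) / h) * G (S i))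
    + q * G O * (h * rsum (S n) (fun i => ph i * F i) - h * rsum n (fun i => ph i * F (S i))).
Proof.
  intros Hh.
  rewrite (rsum_ext (S n) _ (fun i => (p / h) * (F i * (G (S i) - G i)) + q * (F i * (Sg ph G (S i) - Sg ph G i))))
    by (intros; field; exact Hh).
  rewrite (rsum_ext n _ (fun i => (- p / h) * ((F (S i) - F i) * G (S i)) + (- q) * ((Tf ph F n (S i) - Tf ph F n i) * G (S i))))
    by (intros; field; exact Hh).
  rewrite !rsum_lin.
  set (X := rsum n (fun l => F (S l) * Sg ph G (S l))).
  set (Y := rsum n (fun l => F (S l) * Sg ph G (S (S l)))).
  set (Z := rsum n (fun l => ph (S l) * F (S l))).
  assert (Q1 : rsum (S n) (fun i => F i * (Sg ph G (S i) - Sg ph G i)) = F O * ph O * G O + Y - X).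
  { rewrite rsum_shift.
    rewrite (rsum_ext n _ (fun i => F (S i) * Sg ph G (S (S i)) - F (S i) * Sg ph G (S i))) by (intros; ring).
    rewrite rsum_minus. unfold Sg at 1 2. simpl. fold X Y. ring. }
  assert (Q2 : rsum n (fun i => (Tf ph F n (S i) - Tf ph F n i) * G (S i))
               = rsum n (fun i => Tf ph F n (S i) * G (S i)) - rsum n (fun i => Tf ph F n i * G (S i))).
  { rewrite <- rsum_minus. apply rsum_ext; intros; ring. }
  assert (SW1 : rsum n (fun i => Tf ph F n i * G i) = X).
  { unfold Tf.
    rewrite (rsum_ext n _ (fun i => rsum (n - i) (fun m => G i * ph m * F (i + 1 + m)%nat)))
      by (intros; rewrite (Rmult_comm _ (G _)), <- rsum_scal; apply rsum_ext; intros; ring).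
    rewrite rsum_swap. unfold X, Sg. apply rsum_ext; intros l Hl.
    rewrite <- rsum_scal. apply rsum_ext; intros j Hj.
    replace (j + 1 + (l - j))%nat with (S l) by lia.
    replace (S l - 1 - j)%nat with (l - j)%nat by lia. ring. }
  assert (Q3 : rsum n (fun i => Tf ph F n (S i) * G (S i)) = X - Tf ph F n O * G O).
  { assert (E : rsum (S n) (fun i => Tf ph F n i * G i) = X).
    { rewrite rsum_S, SW1. unfold Tf. rewrite Nat.sub_diag. simpl. ring. }
    rewrite rsum_shift in E. lra. }
  assert (Q4 : rsum n (fun i => Tf ph F n i * G (S i)) = Y - G O * Z).
  { unfold Tf.
    rewrite (rsum_ext n _ (fun i => rsum (n - i) (fun m => G (S i) * ph m * F (i + 1 + m)%nat)))
      by (intros; rewrite (Rmult_comm _ (G _)), <- rsum_scal; apply rsum_ext; intros; ring).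
    rewrite rsum_swap.
    assert (EY : Y = rsum n (fun l => G O * (ph (S l) * F (S l)) + 1 * rsum (S l) (fun i => G (S i) * ph (l - i)%nat * F (i + 1 + (l - i))%nat))).
    { unfold Y, Sg. apply rsum_ext; intros l Hl. rewrite rsum_shift.
      replace (S (S l) - 1 - 0)%nat with (S l) by lia.
      rewrite Rmult_plus_distr_l. f_equal; [ring|]. rewrite Rmult_1_l, <- rsum_scal.
      apply rsum_ext; intros j Hj.
      replace (j + 1 + (l - j))%nat with (S l) by lia.
      replace (S (S l) - 1 - S j)%nat with (l - j)%nat by lia. ring. }
    rewrite EY, rsum_lin. fold Z. ring. }
  assert (Q5 : rsum (S n) (fun i => ph i * F i) = ph O * F O + Z) by (rewrite rsum_shift; reflexivity).
  assert (Q6 : rsum n (fun i => ph i * F (S i)) = Tf ph F n O)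
    by (unfold Tf; rewrite Nat.sub_0_r; reflexivity).
  assert (P := P1 n F G).
  rewrite Q1, Q2, Q3, Q4, Q5, Q6.
  replace (rsum (S n) (fun i => F i * (G (S i) - G i)))
    with (F n * G (S n) - F O * G O - rsum n (fun i => (F (S i) - F i) * G (S i))) by lra.
  field. exact Hh.
Qed.

Theorem mainTheorem10 (a h b : R) (k : nat) (f g : R -> R) (alpha : R) :
  0 < h -> (2 <= k)%nat -> b = a + INR k * h ->
  0 < alpha -> alpha <= 1 ->
  let gam := 1 - alpha in
  dint h a b (fun t => f t * left_fdiff h a alpha g t)
  = Rpower h gam * f (trho h b) * g b - Rpower h gam * f a * g a
    + dint h a (trho h b) (fun t => right_fdiff h (trho h b) alpha f t * g (tsigma h t))
    + gam / Gamma (gam + 1) * g a *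
      (dint h a b (fun t => hfact h (t + gam * h - a) (gam - 1) * f t)
       - dint h (tsigma h a) b
           (fun t => hfact h (t + gam * h - tsigma h a) (gam - 1) * f t)).
Proof.
  intros Hh Hk Hb Ha1 Ha2. cbv zeta.
  destruct k as [|n]; [lia|]. subst b.
  replace (trho h (a + INR (S n) * h)) with (a + INR n * h) by (unfold trho; rewrite S_INR; ring).
  rewrite LHS_idx, R1_idx, R2_idx, R3_idx by exact Hh.
  replace (f a) with (f (a + INR 0 * h)) by (f_equal; simpl; ring).
  replace (g a) with (g (a + INR 0 * h)) by (f_equal; simpl; ring).
  exact (algebra h (Rpower h (1 - alpha)) ((1 - alpha) / Gamma (1 - alpha + 1)) (phi h (1 - alpha))
           (fun j => f (a + INR j * h)) (fun j => g (a + INR j * h)) n (Rgt_not_eq _ _ Hh)).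
Qed.
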